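(* Let $\delta_1,\delta_2>0$, $\delta=\delta_1+\delta_2$, and let $f\in\mathcal H$ admit a decomposition $f=\mathcal C+\mathcal T$ with $\|\Phi_1^*\mathcal C\|_1+\|\Phi_2^*\mathcal T\|_1<\infty$, where $\mathcal C$ is $\delta_1$-relatively sparse in $\Phi_1$ with respect to $\Lambda_1$ and $\mathcal T$ is $\delta_2$-relatively sparse in $\Phi_2$ with respect to $\Lambda_2$. Let $(\mathcal C^\star,\mathcal T^\star)$ solve (Inp-Sep) for the data $P_Kf$. Set $$\mu_c=\max\{\mu_c(\Lambda_1,P_M\Phi_1;\Phi_1)+\mu_c(\Lambda_2,P_M\Phi_2;\Phi_1),\ \mu_c(\Lambda_2,P_M\Phi_2;\Phi_2)+\mu_c(\Lambda_1,P_M\Phi_1;\Phi_2)\}+\max\{\mu_c(\Lambda_1,\Phi_1;\Phi_2),\ \mu_c(\Lambda_2,\Phi_2;\Phi_1)\}.$$ If $\mu_c<\tfrac12$, then $\|\mathcal C^\star-\mathcal C\|_2+\|\mathcal T^\star-\mathcal T\|_2\le\frac{2\delta}{1-2\mu_c}$.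
   Context: Let $\mathcal H$ be a separable Hilbert space with an orthogonal decomposition $\mathcal H=\mathcal H_K\oplus\mathcal H_M$ (known and missing part), and let $P_K,P_M$ be the orthogonal projections onto $\mathcal H_K,\mathcal H_M$. Let $\Phi_1=(\phi_{1i})_{i\in I}$ and $\Phi_2=(\phi_{2j})_{j\in J}$ be Parseval frames for $\mathcal H$ with analysis operators $\Phi_1^*f=(\langle f,\phi_{1i}\rangle)_{i\in I}$, $\Phi_2^*f=(\langle f,\phi_{2j}\rangle)_{j\in J}$. $\mathbf 1_\Lambda$ restricts a coefficient sequence to $\Lambda$, $\Lambda^c$ is the complement, and $\|\cdot\|_1$ is the (possibly infinite) $\ell^1$ norm. Fix $\Lambda_1\subset I$, $\Lambda_2\subset J$. Relative sparsity: $g$ is $\delta$-relatively sparse in a Parseval frame $\Phi$ with respect to $\Lambda$ if $\|\mathbf 1_{\Lambda^c}\Phi^*g\|_1\le\delta$. (Inp-Sep): given $P_Kf$, $(\mathcal C^\star,\mathcal T^\star)$ is a minimizer of $\|\Phi_1^*x_1\|_1+\|\Phi_2^*x_2\|_1$ over $x_1,x_2\in\mathcal H$ subject to $P_K(x_1+x_2)=P_Kf$. Cluster coherence: for $a,b\in\{1,2\}$ with $I_1=I$, $I_2=J$ and $\Lambda\subset I_a$: $\mu_c(\Lambda,\Phi_a;\Phi_b)=\max_{j\in I_b}\sum_{i\in\Lambda}|\langle\phi_{ai},\phi_{bj}\rangle|$ and $\mu_c(\Lambda,P_M\Phi_a;\Phi_b)=\max_{j\in I_b}\sum_{i\in\Lambda}|\langle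 P_M\phi_{ai},\phi_{bj}\rangle|$ (suprema if not attained). *)

(* Defs.v *)
From mathcomp Require Import all_boot all_order all_algebra.
From mathcomp Require Import all_classical all_reals all_analysis.
From mathcomp Require Import complex.

Set Implicit Arguments.
Unset Strict Implicit.
Unset Printing Implicit Defensive.

Import Order.TTheory GRing.Theory Num.Theory.
Local Open Scope ring_scope.
Local Open Scope classical_set_scope.

Definition is_inner_product (R : realType) (V : lmodType R[i])
    (ip : V -> V -> R[i]) : Prop :=
  [/\ (forall (a : R[i]) (x y z : V), ip (a *: x + y) z = a * ip x z + ip y z),
      (forall x y : V, ip y x = conjc (ip x y)),
      (forall x : V, complex.Im (ip x x) = 0 /\ 0 <= complex.Re (ip x x)) &
      (forall x : V, ip x x = 0 -> x = 0)].

Definition hnorm (R : realType) (V : lmodType R[i]) (ip : V -> V -> R[i])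
    (x : V) : R := Num.sqrt (complex.Re (ip x x)).

Definition is_sep_hilbert (R : realType) (V : lmodType R[i])
    (ip : V -> V -> R[i]) : Prop :=
  [/\ is_inner_product ip,
      (forall u : nat -> V,
        (forall e : R, 0 < e -> exists N : nat, forall m n : nat,
            (N <= m)%N -> (N <= n)%N -> hnorm ip (u m - u n) < e) ->
        exists l : V, forall e : R, 0 < e -> exists N : nat, forall n : nat,
            (N <= n)%N -> hnorm ip (u n - l) < e) &
      (exists d : nat -> V, forall (x : V) (e : R), 0 < e ->
          exists n : nat, hnorm ip (x - d n) < e)].

Definition is_orth_proj (R : realType) (V : lmodType R[i])
    (ip : V -> V -> R[i]) (P : V -> V) : Prop :=
  [/\ (forall (a : R[i]) (x y : V), P (a *: x + y) = a *: P x + P y),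
      (forall x : V, P (P x) = P x) &
      (forall x y : V, ip (P x) y = ip x (P y))].

Definition analysis (R : realType) (V : lmodType R[i]) (ip : V -> V -> R[i])
    (I : Type) (phi : I -> V) (f : V) : I -> R[i] := fun i => ip f (phi i).

Definition l1_on (R : realType) (I : choiceType) (A : set I) (c : I -> R[i])
    : \bar R := (\esum_(i in A) ((Normc.normc (c i))%:E))%E.

Definition l1 (R : realType) (I : choiceType) (c : I -> R[i]) : \bar R :=
  l1_on setT c.

Definition parseval_frame (R : realType) (V : lmodType R[i])
    (ip : V -> V -> R[i]) (I : choiceType) (phi : I -> V) : Prop :=
  forall f : V,
    (\esum_(i in [set: I]) ((Normc.normc (ip f (phi i)) ^+ 2)%:E))%E
    = ((hnorm ip f) ^+ 2)%:E.

Definition rel_sparse (R : realType) (V : lmodType R[i])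
    (ip : V -> V -> R[i]) (I : choiceType) (phi : I -> V)
    (Lambda : set I) (delta : R) (g : V) : Prop :=
  (l1_on (~` Lambda) (analysis ip phi g) <= delta%:E)%E.

Definition inp_sep_solution (R : realType) (V : lmodType R[i])
    (ip : V -> V -> R[i]) (I J : choiceType) (phi1 : I -> V) (phi2 : J -> V)
    (PK : V -> V) (f Cs Ts : V) : Prop :=
  PK (Cs + Ts) = PK f /\
  forall x1 x2 : V, PK (x1 + x2) = PK f ->
    (l1 (analysis ip phi1 Cs) + l1 (analysis ip phi2 Ts)
      <= l1 (analysis ip phi1 x1) + l1 (analysis ip phi2 x2))%E.

Definition cluster_coherence (R : realType) (V : lmodType R[i])
    (ip : V -> V -> R[i]) (I J : choiceType) (Lambda : set I)
    (psi : I -> V) (phi : J -> V) : \bar R :=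
  ereal_sup (range (fun j : J =>
     (\esum_(i in Lambda) ((Normc.normc (ip (psi i) (phi j)))%:E))%E)).

(* Main.v *)
Require Import Defs.
From mathcomp Require Import all_boot all_order all_algebra.
From mathcomp Require Import all_classical all_reals all_analysis.
From mathcomp Require Import complex.
From mathcomp Require Import ring lra.
Import Order.TTheory GRing.Theory Num.Theory.
Local Open Scope ring_scope.
Local Open Scope classical_set_scope.


Section esum_aux.
Context {R : realType}.
Local Open Scope ereal_scope.

Lemma esum_mulr_le (T : choiceType) (A : set T) (u : T -> \bar R) (c : \bar R) :
  (forall i, 0 <= u i) -> 0 <= c ->
  \esum_(i in A) (u i * c) <= (\esum_(i in A) u i) * c.
Proof.
move=> u0 c0; apply: ge_ereal_sup => _ [X [finX XA] <-].
rewrite fsbig_finite// -ge0_sume_distrl; last first.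
  by move=> i _; apply: u0.
apply: lee_wpmul2r => //; rewrite -fsbig_finite//.
by apply: ereal_sup_ubound; exists X.
Qed.

Lemma esum_swap_le (T1 T2 : choiceType) (A : set T1) (B : set T2)
  (a : T1 -> T2 -> \bar R) : (forall i j, 0 <= a i j) ->
  \esum_(i in A) \esum_(j in B) a i j <= \esum_(j in B) \esum_(i in A) a i j.
Proof.
move=> a0; apply: ge_ereal_sup => _ [X [finX XA] <-].
rewrite fsbig_finite// -esum_sum; last by move=> *; exact: a0.
apply: le_esum => j Bj; rewrite -fsbig_finite//.
by apply: ereal_sup_ubound; exists X.
Qed.

Lemma esum_le3 (T : choiceType) (A : set T) (f g h : T -> \bar R) :
  (forall i, A i -> 0 <= g i) -> (forall i, A i -> 0 <= h i) ->
  (forall i, A i -> f i <= g i + h i) ->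
  \esum_(i in A) f i <= \esum_(i in A) g i + \esum_(i in A) h i.
Proof.
move=> g0 h0 fgh; rewrite -esumD//; exact: le_esum.
Qed.

Lemma esum_split (T : choiceType) (L : set T) (f : T -> \bar R) :
  (forall i, 0 <= f i) ->
  \esum_(i in [set: T]) f i = \esum_(i in L) f i + \esum_(i in ~` L) f i.
Proof. by move=> f0; rewrite (esumID L) // !setTI. Qed.

Lemma esum_single (T : choiceType) (f : T -> \bar R) (j : T) :
  (forall i, 0 <= f i) -> f j <= \esum_(i in [set: T]) f i.
Proof.
move=> f0; apply: esum_ge; exists [set j].
  by split; [exact: finite_set1 | by []].
by rewrite fsbig_set1.
Qed.

End esum_aux.


Section cplx.
Context {R : realType}.
Implicit Types z w : R[i].
Local Notation nc := (@Normc.normc R).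

Lemma nc_ge0 z : 0 <= nc z.
Proof. by case: z => a b; exact: sqrtr_ge0. Qed.

Lemma nc_conj z : nc (conjc z) = nc z.
Proof. by case: z => a b /=; rewrite sqrrN. Qed.

Lemma Re_le_nc z : complex.Re z <= nc z.
Proof.
case: z => a b /=.
have h0 := sqrtr_ge0 (a ^+ 2 + b ^+ 2).
have h1 : (Num.sqrt (a ^+ 2 + b ^+ 2)) ^+ 2 = a ^+ 2 + b ^+ 2.
  by rewrite sqr_sqrtr // addr_ge0 // sqr_ge0.
have h2 := sqr_ge0 b.
rewrite !expr2 in h1 h2; nra.
Qed.

Lemma nc_real (r : R) : 0 <= r -> nc (r%:C)%C = r.
Proof. by move=> r0 /=; rewrite expr0n /= addr0 sqrtr_sqr ger0_norm. Qed.

Lemma conj_mul_nc w : conjc w * w = ((nc w) ^+ 2)%:C%C.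
Proof.
case: w => a b /=; rewrite sqr_sqrtr ?addr_ge0 ?sqr_ge0 //.
apply/eqP; rewrite eq_complex /=; apply/andP; split; apply/eqP.
  by rewrite expr2; ring.
by ring.
Qed.

Lemma cReD z w : complex.Re (z + w) = complex.Re z + complex.Re w.
Proof. by case: z; case: w. Qed.

Lemma cReN z : complex.Re (- z) = - complex.Re z.
Proof. by case: z. Qed.

Lemma cRe_conj z : complex.Re (conjc z) = complex.Re z.
Proof. by case: z. Qed.

Lemma nc_addsq z w : nc (z + w) ^+ 2 <= nc z ^+ 2 + nc w ^+ 2 + nc z * nc w + nc z * nc w.
Proof.
have := le_normcD z w; have := nc_ge0 (z + w); have := nc_ge0 z; have := nc_ge0 w.
rewrite !expr2; nra.
Qed.

End cplx.


Section ip.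
Context {R : realType} {V : lmodType R[i]} (ip : V -> V -> R[i]).
Hypothesis Hip : is_inner_product ip.
Local Notation nc := (@Normc.normc R).

Lemma ipDl x y z : ip (x + y) z = ip x z + ip y z.
Proof. by case: Hip => H _ _ _; have := H 1 x y z; rewrite scale1r mul1r. Qed.

Lemma ip0l z : ip 0 z = 0.
Proof.
have := ipDl 0 0 z; rewrite addr0 => h.
by have := h; rewrite -{1}[ip 0 z]addr0 => /addrI ->.
Qed.

Lemma ipZl a x z : ip (a *: x) z = a * ip x z.
Proof. by case: Hip => H _ _ _; have := H a x 0 z; rewrite addr0 ip0l addr0. Qed.

Lemma ipNl x z : ip (- x) z = - ip x z.
Proof. by rewrite -scaleN1r ipZl mulN1r. Qed.

Lemma ipBl x y z : ip (x - y) z = ip x z - ip y z.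
Proof. by rewrite ipDl ipNl. Qed.

Lemma ip_conj x y : ip y x = conjc (ip x y).
Proof. by case: Hip. Qed.

Lemma ipDr x y z : ip x (y + z) = ip x y + ip x z.
Proof. by rewrite ip_conj ipDl raddfD /= -!ip_conj. Qed.

Lemma ipNr x y : ip x (- y) = - ip x y.
Proof. by rewrite ip_conj ipNl raddfN /= -!ip_conj. Qed.

Lemma hnorm_ge0 x : 0 <= hnorm ip x.
Proof. exact: sqrtr_ge0. Qed.

Lemma hnorm_sq x : hnorm ip x ^+ 2 = complex.Re (ip x x).
Proof. by rewrite /hnorm sqr_sqrtr //; case: Hip => _ _ H _; case: (H x). Qed.

Lemma Re_ipDD x g : complex.Re (ip (x + g) (x + g)) =
  complex.Re (ip x x) + complex.Re (ip g g) + 2 * complex.Re (ip x g).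
Proof.
rewrite ipDl !ipDr !cReD [ip g x]ip_conj; have := cRe_conj (ip x g); lra.
Qed.

End ip.


Section frame.
Context {R : realType} {V : lmodType R[i]} (ip : V -> V -> R[i]).
Hypothesis Hip : is_inner_product ip.
Context {K : choiceType} (psi : K -> V).
Hypothesis Hpf : parseval_frame ip psi.
Local Notation nc := (@Normc.normc R).

Lemma re_bound x g : ((complex.Re (ip x g))%:E <=
  \esum_(j in [set: K]) (nc (ip x (psi j)) * nc (ip g (psi j)))%:E)%E.
Proof.
set Y := esum _ _.
have Y0 : (0 <= Y)%E by apply: esum_ge0 => j _; rewrite lee_fin mulr_ge0 // nc_ge0.
have A : ((hnorm ip (x + g) ^+ 2)%:E <=
    (hnorm ip x ^+ 2)%:E + (hnorm ip g ^+ 2)%:E + Y + Y)%E.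
  rewrite -!Hpf.
  apply: (@le_trans _ _ (\esum_(j in [set: K])
     ((nc (ip x (psi j)) ^+ 2)%:E + (nc (ip g (psi j)) ^+ 2)%:E
      + (nc (ip x (psi j)) * nc (ip g (psi j)))%:E
      + (nc (ip x (psi j)) * nc (ip g (psi j)))%:E))%E).
    apply: le_esum => j _; rewrite (ipDl _ Hip) -!EFinD lee_fin; exact: nc_addsq.
  rewrite !esumD // => j _; rewrite ?adde_ge0 // lee_fin ?mulr_ge0 ?sqr_ge0 ?nc_ge0 //.
clearbody Y; move: A Y0; case: Y => [y| |] //; last by move=> *; rewrite leey.
move=> A _; rewrite -!EFinD !lee_fin in A *.
move: A; rewrite !(hnorm_sq _ Hip) (Re_ipDD _ Hip); lra.
Qed.


Lemma abs_bound x g : ((nc (ip x g))%:E <=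
  \esum_(j in [set: K]) (nc (ip x (psi j)) * nc (ip g (psi j)))%:E)%E.
Proof.
have [w0|wn0] := eqVneq (ip x g) 0.
  rewrite w0 Normc.normc0; apply: esum_ge0 => j _.
  by rewrite lee_fin mulr_ge0 // nc_ge0.
set w := ip x g in wn0 *.
have ncw0 : nc w != 0 by apply: contra wn0 => /eqP /Normc.eq0_normc ->.
have ncC0 : ((nc w)%:C)%C != 0 :> R[i].
  by apply: contra ncw0 => /eqP [] ->.
set u : R[i] := conjc w * (((nc w)%:C)%C)^-1.
have nu : nc u = 1.
  rewrite /u Normc.normcM nc_conj Normc.normcV nc_real ?nc_ge0 //.
  by rewrite divrr // unitfE.
have uw : u * w = ((nc w)%:C)%C.
  rewrite /u mulrAC conj_mul_nc expr2 rmorphM /=.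
  by rewrite mulfK.
have := re_bound (u *: x) g.
rewrite (ipZl _ Hip) uw /=.
move=> h; apply: (le_trans h); apply: le_esum => j _.
by rewrite (ipZl _ Hip) Normc.normcM nu mul1r.
Qed.

Lemma hnorm_le_l1 x : ((hnorm ip x)%:E <= l1 (analysis ip psi x))%E.
Proof.
rewrite /l1 /l1_on /analysis.
move HS : (esum _ _) => S.
have S0 : (0 <= S)%E by rewrite -HS; apply: esum_ge0 => j _; rewrite lee_fin nc_ge0.
have single j : ((nc (ip x (psi j)))%:E <= S)%E.
  by rewrite -HS; apply: esum_single => i; rewrite lee_fin nc_ge0.
move: HS S0 single; case: S => [s| |] //; last by move=> *; rewrite leey.
move=> HS s0 single.
have h : ((hnorm ip x ^+ 2)%:E <= (s * s)%:E)%E.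
  rewrite -Hpf EFinM.
  apply: (@le_trans _ _ (\esum_(j in [set: K]) ((nc (ip x (psi j)))%:E * s%:E))%E).
    apply: le_esum => j _; rewrite -EFinM lee_fin expr2.
    apply: ler_wpM2l; first exact: nc_ge0.
    by rewrite -lee_fin; exact: single.
  apply: (@le_trans _ _ ((\esum_(j in [set: K]) (nc (ip x (psi j)))%:E) * s%:E))%E.
    by apply: esum_mulr_le => [j|]; rewrite lee_fin ?nc_ge0.
  by rewrite HS.
rewrite lee_fin in h; rewrite lee_fin; rewrite lee_fin in s0.
have := hnorm_ge0 ip x; move: h; rewrite expr2; nra.
Qed.

Lemma coh_bound (I0 : choiceType) (L : set I0) (theta : I0 -> V) (x : V) :
  (0 <= cluster_coherence ip L theta psi)%E ->
  (\esum_(i in L) \esum_(j in [set: K])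
      (nc (ip x (psi j)) * nc (ip (theta i) (psi j)))%:E
   <= l1 (analysis ip psi x) * cluster_coherence ip L theta psi)%E.
Proof.
move=> mu0.
have H := @esum_swap_le R I0 K L [set: K]
  (fun i j => (nc (ip x (psi j)) * nc (ip (theta i) (psi j)))%:E%E).
apply: (le_trans (H _)).
  by move=> i j; rewrite lee_fin mulr_ge0 // nc_ge0.
apply: (@le_trans _ _ (\esum_(j in [set: K])
   ((nc (ip x (psi j)))%:E * cluster_coherence ip L theta psi))%E); last first.
  by apply: esum_mulr_le => // j; rewrite lee_fin nc_ge0.
apply: le_esum => j _.
apply: (@le_trans _ _ ((\esum_(i in L) (nc (ip (theta i) (psi j)))%:E)
    * (nc (ip x (psi j)))%:E)%E).
  apply: (@le_trans _ _ (\esum_(i in L) ((nc (ip (theta i) (psi j)))%:E * (nc (ip x (psi j)))%:E))%E).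
    by apply: le_esum => i _; rewrite -EFinM mulrC.
  by apply: esum_mulr_le => [i|]; rewrite lee_fin nc_ge0.
rewrite muleC; apply: lee_wpmul2l; first by rewrite lee_fin nc_ge0.
by apply: ereal_sup_ubound; exists j.
Qed.

End frame.


Section side.
Context {R : realType} {V : lmodType R[i]} (ip : V -> V -> R[i]).
Hypothesis Hip : is_inner_product ip.
Local Notation nc := (@Normc.normc R).

Lemma nc_sub3 (a b c : R[i]) : nc (a - b + c) <= nc a + nc b + nc c.
Proof.
apply: le_trans (le_normcD _ _) _; rewrite lerD2r.
by apply: le_trans (le_normcD _ _) _; rewrite normcN.
Qed.

Lemma side_bound (I1 J1 : choiceType) (psi1 : I1 -> V) (psi2 : J1 -> V)
  (PM : V -> V) (L : set I1) (z1 z2 : V) :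
  parseval_frame ip psi1 -> parseval_frame ip psi2 ->
  (forall i, ip z1 (psi1 i) = ip z1 (PM (psi1 i)) - ip z2 (psi1 i) + ip z2 (PM (psi1 i))) ->
  (0 <= cluster_coherence ip L (PM \o psi1) psi1)%E ->
  (0 <= cluster_coherence ip L psi1 psi2)%E ->
  (0 <= cluster_coherence ip L (PM \o psi1) psi2)%E ->
  (\esum_(i in L) (nc (ip z1 (psi1 i)))%:E <=
     l1 (analysis ip psi1 z1) * cluster_coherence ip L (PM \o psi1) psi1
   + l1 (analysis ip psi2 z2) * cluster_coherence ip L psi1 psi2
   + l1 (analysis ip psi2 z2) * cluster_coherence ip L (PM \o psi1) psi2)%E.
Proof.
move=> F1 F2 Hz c1 c2 c3.
apply: (@le_trans _ _ (\esum_(i in L) ((nc (ip z1 (PM (psi1 i))))%:E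
   + (nc (ip z2 (psi1 i)))%:E + (nc (ip z2 (PM (psi1 i))))%:E))%E).
  by apply: le_esum => i _; rewrite Hz -!EFinD lee_fin nc_sub3.
rewrite !esumD //; try by move=> *; rewrite ?adde_ge0 ?lee_fin ?nc_ge0.
apply: leeD; first apply: leeD.
- apply: le_trans; last exact: (@coh_bound _ _ ip _ psi1 _ _ _ _ c1).
  by apply: le_esum => i _; exact: (abs_bound _ Hip _ F1).
- apply: le_trans; last exact: (@coh_bound _ _ ip _ psi2 _ _ _ _ c2).
  by apply: le_esum => i _; exact: (abs_bound _ Hip _ F2).
- apply: le_trans; last exact: (@coh_bound _ _ ip _ psi2 _ _ _ _ c3).
  by apply: le_esum => i _; exact: (abs_bound _ Hip _ F2).
Qed.

End side.


Lemma ge0_finE {R : realType} {x : \bar R} : (0 <= x)%E -> (x < +oo)%E -> x = (fine x)%:E.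
Proof. by case: x. Qed.

Lemma sum_fin {R : realType} {a b : \bar R} : (0 <= a)%E -> (0 <= b)%E -> (a + b < +oo)%E ->
  (a < +oo)%E /\ (b < +oo)%E.
Proof. by move: a b => [a| |] [b| |] //=; rewrite ?ltry. Qed.

Section pack.
Context {R : realType} {V : lmodType R[i]} (ip : V -> V -> R[i]).
Hypothesis Hip : is_inner_product ip.
Local Notation nc := (@Normc.normc R).

Lemma frame_pack (K : choiceType) (psi : K -> V) (L : set K) (c cs : V) :
  (l1 (analysis ip psi c) < +oo)%E -> (l1 (analysis ip psi cs) < +oo)%E ->
  exists A B P Q X Y : R,
  [/\ [/\ 0 <= A, 0 <= B, 0 <= P & 0 <= Q], 0 <= X /\ 0 <= Y,
   [/\ l1 (analysis ip psi c) = (A + B)%:E,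
      (\esum_(i in ~` L) (nc (ip c (psi i)))%:E)%E = B%:E,
      l1 (analysis ip psi cs) = (P + Q)%:E &
      l1 (analysis ip psi (cs - c)) = (X + Y)%:E] &
      [/\ (\esum_(i in L) (nc (ip (cs - c) (psi i)))%:E)%E = X%:E, A <= P + X & Y <= Q + B]].
Proof.
move=> hc hcs.
pose F v (A : set K) := (\esum_(i in A) (nc (ip v (psi i)))%:E)%E.
have F0 v A : (0 <= F v A)%E by apply: esum_ge0 => i _; rewrite lee_fin nc_ge0.
have Fs v : l1 (analysis ip psi v) = (F v L + F v (~` L))%E.
  by rewrite /l1 /l1_on /analysis (esum_split _ L) // => i; rewrite lee_fin nc_ge0.
have hz : (l1 (analysis ip psi (cs - c)) < +oo)%E.
  apply: le_lt_trans (lte_add_pinfty hcs hc).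
  rewrite /l1 /l1_on /analysis; apply: esum_le3 => [i _|i _|i _]; rewrite ?lee_fin ?nc_ge0 //.
  by rewrite -?EFinD ?lee_fin (ipBl _ Hip); apply: le_trans (le_normcD _ _) _; rewrite normcN.
rewrite Fs in hc; rewrite Fs in hcs; rewrite Fs in hz.
have [hc1 hc2] := sum_fin (F0 _ _) (F0 _ _) hc.
have [hs1 hs2] := sum_fin (F0 _ _) (F0 _ _) hcs.
have [hz1 hz2] := sum_fin (F0 _ _) (F0 _ _) hz.
have e1 := ge0_finE (F0 _ _) hc1; have e2 := ge0_finE (F0 _ _) hc2.
have e3 := ge0_finE (F0 _ _) hs1; have e4 := ge0_finE (F0 _ _) hs2.
have e5 := ge0_finE (F0 _ _) hz1; have e6 := ge0_finE (F0 _ _) hz2.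
have g v A : (0 <= fine (F v A)) by apply: fine_ge0.
exists (fine (F c L)), (fine (F c (~` L))), (fine (F cs L)), (fine (F cs (~` L))),
  (fine (F (cs - c) L)), (fine (F (cs - c) (~` L))).
split => //.
split.
- by rewrite Fs EFinD -e1 -e2.
- exact: e2.
- by rewrite Fs EFinD -e3 -e4.
- by rewrite Fs EFinD -e5 -e6.
split; first exact: e5.
- rewrite -lee_fin EFinD -e1 -e3 -e5; apply: esum_le3 => [i _|i _|i _]; rewrite ?lee_fin ?nc_ge0 //.
  rewrite -?EFinD ?lee_fin.
  have -> : ip c (psi i) = ip cs (psi i) - ip (cs - c) (psi i) by rewrite (ipBl _ Hip); ring.
  by apply: le_trans (le_normcD _ _) _; rewrite normcN.
- rewrite -lee_fin EFinD -e6 -e4 -e2; apply: esum_le3 => [i _|i _|i _]; rewrite ?lee_fin ?nc_ge0 //.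
  rewrite -?EFinD ?lee_fin (ipBl _ Hip).
  by apply: le_trans (le_normcD _ _) _; rewrite normcN.
Qed.

End pack.


Lemma fine_lt_half {R : realType} {x : \bar R} : (x < (1 / 2 : R)%:E)%E -> fine x < 1 / 2.
Proof. by case: x => [r| |] //=; rewrite lte_fin. Qed.

Lemma six_fin {R : realType} {x y z w u v : \bar R} :
  (0 <= x)%E -> (0 <= y)%E -> (0 <= z)%E -> (0 <= w)%E -> (0 <= u)%E -> (0 <= v)%E ->
  (maxe (x + y) (z + w) + maxe u v < (1 / 2 : R)%:E)%E ->
  exists a b c d e f : R, [/\ x = a%:E, y = b%:E, z = c%:E, w = d%:E &
    [/\ u = e%:E, v = f%:E & maxe (x + y) (z + w) + maxe u v =
      (Num.max (a + b) (c + d) + Num.max e f)%:E]].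
Proof.
move=> x0 y0 z0 w0 u0 v0 h.
have hm : (maxe (x + y) (z + w) + maxe u v < +oo)%E by apply: lt_trans h (ltry _).
have m10 : (0 <= maxe (x + y) (z + w))%E by rewrite le_max adde_ge0.
have m20 : (0 <= maxe u v)%E by rewrite le_max u0.
have [h1 h2] := sum_fin m10 m20 hm.
have hxy : (x + y < +oo)%E by apply: le_lt_trans h1; rewrite le_max lexx.
have hzw : (z + w < +oo)%E by apply: le_lt_trans h1; rewrite le_max lexx orbT.
have hu : (u < +oo)%E by apply: le_lt_trans h2; rewrite le_max lexx.
have hv : (v < +oo)%E by apply: le_lt_trans h2; rewrite le_max lexx orbT.
have [hx hy] := sum_fin x0 y0 hxy.
have [hz hw] := sum_fin z0 w0 hzw.
exists (fine x), (fine y), (fine z), (fine w), (fine u), (fine v).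
rewrite -(ge0_finE x0 hx) -(ge0_finE y0 hy) -(ge0_finE z0 hz) -(ge0_finE w0 hw).
rewrite -(ge0_finE u0 hu) -(ge0_finE v0 hv).
split => //; split => //.
by rewrite EFinD !EFin_max !EFinD -(ge0_finE x0 hx) -(ge0_finE y0 hy)
  -(ge0_finE z0 hz) -(ge0_finE w0 hw) -(ge0_finE u0 hu) -(ge0_finE v0 hv).
Qed.

Section misc.
Context {R : realType} {V : lmodType R[i]} (ip : V -> V -> R[i]).
Local Notation nc := (@Normc.normc R).

Lemma coh_ge0 (I0 K : choiceType) (L : set I0) (theta : I0 -> V) (psi : K -> V) :
  (exists j : K, True) -> (0 <= cluster_coherence ip L theta psi)%E.
Proof.
move=> [j _].
apply: (@le_trans _ _ (\esum_(i in L) (nc (ip (theta i) (psi j)))%:E)%E).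
  by apply: esum_ge0 => i _; rewrite lee_fin nc_ge0.
by apply: ereal_sup_ubound; exists j.
Qed.

Lemma empty_frame (K : choiceType) (psi : K -> V) :
  parseval_frame ip psi -> ~ (exists j : K, True) -> forall v, hnorm ip v = 0.
Proof.
move=> Hpf ne v; have := Hpf v; rewrite esum1 => [h|j _]; last first.
  by exfalso; apply: ne; exists j.
have : hnorm ip v ^+ 2 = 0 by apply/esym; case: h.
by move/eqP; rewrite sqrf_eq0 => /eqP.
Qed.

Lemma proj_add {P : V -> V} : is_orth_proj ip P -> forall x y, P (x + y) = P x + P y.
Proof. by case=> H _ _ x y; have := H 1 x y; rewrite !scale1r. Qed.

Lemma proj0 {P : V -> V} : is_orth_proj ip P -> P 0 = 0.
Proof.
move=> HP; have := proj_add HP 0 0; rewrite addr0 => h.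
by move: h; rewrite -{1}[P 0]addr0 => /addrI /esym.
Qed.

Lemma projN {P : V -> V} : is_orth_proj ip P -> forall x, P (- x) = - P x.
Proof.
move=> HP x; case: (HP) => H _ _; have := H (-1) x 0.
by rewrite addr0 proj0 // addr0 !scaleN1r.
Qed.

End misc.


Lemma l1_ge0 {R : realType} (I : choiceType) (c : I -> R[i]) : (0 <= l1 c)%E.
Proof. by apply: esum_ge0 => i _; rewrite lee_fin nc_ge0. Qed.

Lemma zm3 (M : zmodType) (a b c : M) : - (a - b) + c = c - a + b.
Proof. by rewrite opprB addrAC [RHS]addrAC [c + b]addrC. Qed.

Theorem mainTheorem4 (R : realType) (V : lmodType R[i]) (ip : V -> V -> R[i])
  (PK PM : V -> V) (I J : choiceType) (phi1 : I -> V) (phi2 : J -> V)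
  (Lambda1 : set I) (Lambda2 : set J) (delta1 delta2 : R) (f C T Cs Ts : V) :
  is_sep_hilbert ip ->
  is_orth_proj ip PK -> is_orth_proj ip PM -> (forall x, PK x + PM x = x) ->
  parseval_frame ip phi1 -> parseval_frame ip phi2 ->
  0 < delta1 -> 0 < delta2 ->
  f = C + T ->
  (l1 (analysis ip phi1 C) + l1 (analysis ip phi2 T) < +oo)%E ->
  rel_sparse ip phi1 Lambda1 delta1 C ->
  rel_sparse ip phi2 Lambda2 delta2 T ->
  inp_sep_solution ip phi1 phi2 PK f Cs Ts ->
  let mu_c : \bar R :=
    (maxe (cluster_coherence ip Lambda1 (PM \o phi1) phi1
             + cluster_coherence ip Lambda2 (PM \o phi2) phi1)
          (cluster_coherence ip Lambda2 (PM \o phi2) phi2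
             + cluster_coherence ip Lambda1 (PM \o phi1) phi2)
     + maxe (cluster_coherence ip Lambda1 phi1 phi2)
            (cluster_coherence ip Lambda2 phi2 phi1))%E in
  (mu_c < (1 / 2 : R)%:E)%E ->
  hnorm ip (Cs - C) + hnorm ip (Ts - T)
    <= 2 * (delta1 + delta2) / (1 - 2 * fine mu_c).
Proof.
move=> Hsh HPK HPM HKM Hf1 Hf2 d1 d2 fCT Hfin Hsp1 Hsp2 [HPKsol Hopt] mu_c Hmu.
have Hip : is_inner_product ip by case: Hsh.
have fmu := fine_lt_half Hmu.
have den : 0 < 1 - 2 * fine mu_c by lra.
have [hI|hI] := pselect (exists i : I, True); last first.
  rewrite !(@empty_frame _ _ ip _ _ Hf1 hI) addr0; apply: divr_ge0; lra.
have [hJ|hJ] := pselect (exists j : J, True); last first.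
  rewrite !(@empty_frame _ _ ip _ _ Hf2 hJ) addr0; apply: divr_ge0; lra.
have [m11 [m21 [m22 [m12 [n12 [n21 [E11 E21 E22 E12 [N12 N21 Emu]]]]]]]] :=
  six_fin (coh_ge0 ip _ _ Lambda1 (PM \o phi1) phi1 hI) (coh_ge0 ip _ _ Lambda2 (PM \o phi2) phi1 hI)
          (coh_ge0 ip _ _ Lambda2 (PM \o phi2) phi2 hJ) (coh_ge0 ip _ _ Lambda1 (PM \o phi1) phi2 hJ)
          (coh_ge0 ip _ _ Lambda1 phi1 phi2 hJ) (coh_ge0 ip _ _ Lambda2 phi2 phi1 hI) Hmu.
have Fmu : fine mu_c = Num.max (m11 + m21) (m22 + m12) + Num.max n12 n21.
  by rewrite /mu_c Emu.

have g11 : 0 <= m11 by rewrite -lee_fin -E11 (coh_ge0 ip _ _ _ _ _ hI).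
have g21 : 0 <= m21 by rewrite -lee_fin -E21 (coh_ge0 ip _ _ _ _ _ hI).
have g22 : 0 <= m22 by rewrite -lee_fin -E22 (coh_ge0 ip _ _ _ _ _ hJ).
have g12 : 0 <= m12 by rewrite -lee_fin -E12 (coh_ge0 ip _ _ _ _ _ hJ).
have h12 : 0 <= n12 by rewrite -lee_fin -N12 (coh_ge0 ip _ _ _ _ _ hJ).
have h21 : 0 <= n21 by rewrite -lee_fin -N21 (coh_ge0 ip _ _ _ _ _ hI).
have PKz : PK (Cs - C) = - PK (Ts - T).
  have : PK ((Cs - C) + (Ts - T)) = 0.
    have -> : (Cs - C) + (Ts - T) = (Cs + Ts) - (C + T) by rewrite opprD addrACA.
    by rewrite (proj_add _ HPK) (projN _ HPK) HPKsol fCT subrr.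
  by rewrite (proj_add _ HPK) => /eqP; rewrite addr_eq0 => /eqP.
have PKz' : PK (Ts - T) = - PK (Cs - C) by rewrite PKz opprK.
have HPMs : forall x y, ip (PM x) y = ip x (PM y) by case: HPM.
have id1 : forall i, ip (Cs - C) (phi1 i) = ip (Cs - C) (PM (phi1 i))
    - ip (Ts - T) (phi1 i) + ip (Ts - T) (PM (phi1 i)).
  move=> i; rewrite -!HPMs -(ipBl _ Hip) -(ipDl _ Hip); congr ip.
  rewrite -{1}(HKM (Cs - C)) PKz.
  have -> : PK (Ts - T) = (Ts - T) - PM (Ts - T) by rewrite -{2}(HKM (Ts - T)) addrK.
  exact: zm3.
have id2 : forall j, ip (Ts - T) (phi2 j) = ip (Ts - T) (PM (phi2 j))
    - ip (Cs - C) (phi2 j) + ip (Cs - C) (PM (phi2 j)).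
  move=> j; rewrite -!HPMs -(ipBl _ Hip) -(ipDl _ Hip); congr ip.
  rewrite -{1}(HKM (Ts - T)) PKz'.
  have -> : PK (Cs - C) = (Cs - C) - PM (Cs - C) by rewrite -{2}(HKM (Cs - C)) addrK.
  exact: zm3.

have S1 := @side_bound _ _ ip Hip _ _ phi1 phi2 PM Lambda1 (Cs - C) (Ts - T) Hf1 Hf2 id1
  (coh_ge0 ip _ _ _ _ _ hI) (coh_ge0 ip _ _ _ _ _ hJ) (coh_ge0 ip _ _ _ _ _ hJ).
have S2 := @side_bound _ _ ip Hip _ _ phi2 phi1 PM Lambda2 (Ts - T) (Cs - C) Hf2 Hf1 id2
  (coh_ge0 ip _ _ _ _ _ hJ) (coh_ge0 ip _ _ _ _ _ hI) (coh_ge0 ip _ _ _ _ _ hI).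
have Hopt' := Hopt C T (congr1 PK (esym fCT)).
have [hC hT] := sum_fin (l1_ge0 _ _) (l1_ge0 _ _) Hfin.
have [hCs hTs] := sum_fin (l1_ge0 _ _) (l1_ge0 _ _) (le_lt_trans Hopt' Hfin).
have [A1 [B1 [P1 [Q1 [X1 [Y1 [[a1 b1 p1 q1] [x1 y1] [lC lB1 lCs lz1] [lX1 i1 j1]]]]]]]] :=
  @frame_pack _ _ ip Hip _ phi1 Lambda1 C Cs hC hCs.
have [A2 [B2 [P2 [Q2 [X2 [Y2 [[a2 b2 p2 q2] [x2 y2] [lT lB2 lTs lz2] [lX2 i2 j2]]]]]]]] :=
  @frame_pack _ _ ip Hip _ phi2 Lambda2 T Ts hT hTs.
have hn1 := @hnorm_le_l1 _ _ ip _ _ Hf1 (Cs - C).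
have hn2 := @hnorm_le_l1 _ _ ip _ _ Hf2 (Ts - T).
rewrite lz1 lee_fin in hn1; rewrite lz2 lee_fin in hn2.
move: Hsp1; rewrite /rel_sparse /l1_on /analysis /= lB1 lee_fin => Hs1.
move: Hsp2; rewrite /rel_sparse /l1_on /analysis /= lB2 lee_fin => Hs2.
rewrite lC lT lCs lTs -!EFinD lee_fin in Hopt'.
rewrite lX1 lz1 lz2 E11 N12 E12 -!EFinM -!EFinD lee_fin in S1.
rewrite lX2 lz1 lz2 E22 N21 E21 -!EFinM -!EFinD lee_fin in S2.
rewrite Fmu in den *.
set M1 := Num.max (m11 + m21) (m22 + m12) in den *.
set M2 := Num.max n12 n21 in den *.
have M1a : m11 + m21 <= M1 by rewrite le_max lexx.
have M1b : m22 + m12 <= M1 by rewrite le_max lexx orbT.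
have M2a : n12 <= M2 by rewrite le_max lexx.
have M2b : n21 <= M2 by rewrite le_max lexx orbT.
have k1 : (X1 + Y1) * (m11 + m21 + n21) <= (X1 + Y1) * (M1 + M2).
  by apply: ler_wpM2l; lra.
have k2 : (X2 + Y2) * (m22 + m12 + n12) <= (X2 + Y2) * (M1 + M2).
  by apply: ler_wpM2l; lra.
have key : X1 + X2 <= (M1 + M2) * (X1 + Y1 + (X2 + Y2)) by nra.
rewrite ler_pdivlMr //.
nra.
Qed.
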